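(* The function $k_p$ is a closure operator on $\mathcal{L}$, i.e. for all $\ell, \jmath \in \mathcal{L}$: (1) $\ell \sqsubseteq k_p(\ell)$; (2) $\ell \sqsubseteq \jmath \implies k_p(\ell) \sqsubseteq k_p(\jmath)$; (3) $k_p(\ell) = k_p(k_p(\ell))$.
   Context: $\mathcal{L}$ is a security lattice (ordered by $\sqsubseteq$) that also has greatest lower bounds (meets) of arbitrary subsets. Programs $p$ are partial functions from $\mathcal{P}(I \times \mathcal{L})$ to $\mathcal{P}(O \times \mathcal{L})$ (sets of labeled inputs to sets of labeled outputs), and for a labeled set $x$, $\mathcal{L}(x) = \{\ell \mid a^\ell \in x\}$ is the set of labels occurring in $x$. For such a program $p$ define $k_p(\ell)$ to be the greatest lower bound (meet) in $\mathcal{L}$ of the set $\{\jmath \mid \exists x.\ \jmath \in \mathcal{L}(p(x)) \wedge \ell \sqsubseteq \jmath\}$, i.e. of all output labels of $p$ that lie above $\ell$ (the meet of the empty set being the top element). *)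

(* Defs.v *)
From mathcomp Require Import all_boot all_order.
Set Implicit Arguments. Unset Strict Implicit. Unset Printing Implicit Defensive.
Import Order.TTheory.
Local Open Scope order_scope.

Definition is_glb_op (d : Order.disp_t) (L : porderType d) (inf : (L -> Prop) -> L) : Prop :=
  forall S : L -> Prop,
    (forall x, S x -> inf S <= x) /\
    (forall y, (forall x, S x -> y <= x) -> y <= inf S).

(* A program: partial function from sets of labeled inputs to sets of
   labeled outputs; partiality is modelled with [option]. *)
Definition program (I O : Type) (L : Type) :=
  (I * L -> Prop) -> option (O * L -> Prop).

Definition labels (A L : Type) (x : A * L -> Prop) : L -> Prop :=
  fun l => exists a, x (a, l).

Definition out_labels (I O L : Type) (p : program I O L) : L -> Prop :=
  fun j => exists x y, p x = Some y /\ labels y j.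

Definition kp (d : Order.disp_t) (L : porderType d) (inf : (L -> Prop) -> L)
  (I O : Type) (p : program I O L) (l : L) : L :=
  inf (fun j => out_labels p j /\ l <= j).

(* Main.v *)
Require Import Defs.
From mathcomp Require Import all_boot all_order.
Import Order.TTheory.
Local Open Scope order_scope.

Theorem mainTheorem11 (d : Order.disp_t) (L : latticeType d)
  (inf : (L -> Prop) -> L) (Hinf : is_glb_op inf)
  (I O : Type) (p : program I O L) :
  (forall l : L, l <= kp inf p l) /\
  (forall l j : L, l <= j -> kp inf p l <= kp inf p j) /\
  (forall l : L, kp inf p l = kp inf p (kp inf p l)).
Proof.
have H1 : forall l : L, l <= kp inf p l.
  move=> l; rewrite /kp; apply: (proj2 (Hinf _)) => x [] _ //.
have H2 : forall l j : L, l <= j -> kp inf p l <= kp inf p j.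
  move=> l j lj; rewrite /kp; apply: (proj2 (Hinf _)) => x [ox jx].
  apply: (proj1 (Hinf _)); split => //; exact: le_trans lj jx.
split => //; split => // l.
apply/le_anti; rewrite H1 /=.
rewrite {2}/kp; apply: (proj2 (Hinf _)) => x [ox lx].
rewrite /kp; apply: (proj1 (Hinf _)); split => //.
by apply: (proj1 (Hinf _)); split.
Qed.
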